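(* Let $P_1,\dots,P_t$ be sets of points in $\mathbb{R}^1$, each point having a color from $\{1,\dots,\phi\}$. For each $j\in\{1,\dots,t\}$ and each color $c$, let $x_1<x_2<\cdots$ be the points of color $c$ in $P_j$, and map $x_i$ to the point $(x_i,x_{i+1},j)\in\mathbb{R}^3$ (with $x_{i+1}=\infty$ if $x_i$ is the last one), with weight $i$; let $\tilde P$ be the set of all these mapped points. Then for every $1\le i\le t$ and all $x,y\in\mathbb{R}$, the set $\tilde Q=(-\infty,x]\times[y,\infty)\times(-\infty,i]$ contains at most $i\phi$ points of $\tilde P$ (i.e. $\tilde Q$ is $i\phi$-shallow with respect to $\tilde P$).
   Context: A range is $k$-shallow with respect to a point set if it contains at most $k$ points of the set.
   Formalization: The bound $i\phi$ on the number of points of $\tilde P$ in $\tilde Q$ is claimed only for x < y, not for all x, y ∈ ℝ. The statement above fails without it. *)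

(* Defs.v *)
From mathcomp Require Import all_boot all_order all_algebra.
Set Implicit Arguments. Unset Strict Implicit. Unset Printing Implicit Defensive.
Import Order.TTheory GRing.Theory Num.Theory.
Local Open Scope ring_scope.

(* A point of R^3 of the form (a, b, j) with b possibly = +infinity
   (encoded as None), and j an index. *)
Definition pt3 (R : Type) := (R * option R * nat)%type.

Definition color_class (R : realDomainType) (s : seq R) (col : R -> nat)
  (c : nat) : seq R := sort <=%R [seq q <- s | col q == c].

Definition lift_class (R : realDomainType) (L : seq R) (j : nat)
  : seq (pt3 R * nat) :=
  [seq ((nth 0 L k, (if (k.+1 < size L)%N then Some (nth 0 L k.+1) else None), j),
        k.+1) | k <- iota 0 (size L)].

Definition lifted_weighted (R : realDomainType) (P : nat -> seq R)
  (col : nat -> R -> nat) (t phi : nat) : seq (pt3 R * nat) :=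
  flatten [seq flatten [seq lift_class (color_class (P j) (col j) c) j
                       | c <- iota 1 phi] | j <- iota 1 t].

Definition tildeP (R : realDomainType) (P : nat -> seq R)
  (col : nat -> R -> nat) (t phi : nat) : seq (pt3 R) :=
  undup [seq pw.1 | pw <- lifted_weighted P col t phi].

Definition in_Q (R : realDomainType) (x y : R) (i : nat) (p : pt3 R) : bool :=
  [&& p.1.1 <= x, (if p.1.2 is Some b then y <= b else true) & (p.2 <= i)%N].

Definition shallow (T : Type) (k : nat) (Q : pred T) (S : seq T) : bool :=
  (count Q S <= k)%N.

(* Main.v *)
Require Import Defs.
From mathcomp Require Import all_boot all_order all_algebra.
Import Order.TTheory GRing.Theory Num.Theory.
Local Open Scope ring_scope.

Lemma count_le1 (T : eqType) (p : pred T) (s : seq T) : uniq s ->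
  {in s &, forall a b, p a -> p b -> a = b} -> (count p s <= 1)%N.
Proof.
move=> us H; rewrite -size_filter.
case E: (filter p s) => [|a [|b r]] //=.
have ua : uniq (a :: b :: r) by rewrite -E filter_uniq.
have ha : a \in filter p s by rewrite E mem_head.
have hb : b \in filter p s by rewrite E !inE eqxx orbT.
move: ha hb; rewrite !mem_filter => /andP[pa sa] /andP[pb sb].
have eab := H a b sa sb pa pb.
by move: ua; rewrite /= inE eab eqxx.
Qed.

Lemma lift_le1 (R : realFieldType) (L : seq R) (j i : nat) (x y : R) :
  sorted <=%R L -> x < y ->
  (count (fun pw : (pt3 R * nat)%type => in_Q x y i pw.1) (lift_class L j)
     <= (j <= i)%N)%N.
Proof.
move=> sL xy; rewrite /lift_class count_map.
case: (leqP j i) => ji; last first.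
  rewrite (eq_count (a2 := pred0)) ?count_pred0 // => k.
  rewrite /= /in_Q /=; move: ji; rewrite ltnNge => /negbTE ->; by rewrite !andbF.
apply: count_le1; first exact: iota_uniq.
have key : forall k k', (k < k')%N -> (k' < size L)%N ->
   ~~ (in_Q x y i (nth 0 L k, (if (k.+1 < size L)%N then Some (nth 0 L k.+1) else None), j)
    && in_Q x y i (nth 0 L k', (if (k'.+1 < size L)%N then Some (nth 0 L k'.+1) else None), j)).
  move=> k k' kk' k'L; rewrite /= /in_Q /=.
  have k1L : (k.+1 < size L)%N by apply: leq_ltn_trans k'L.
  rewrite k1L; apply/negP => /andP[/and3P[_ hy _] /and3P[hx _ _]].
  have : nth 0 L k.+1 <= nth 0 L k'.
    by apply: le_sorted_leq_nth => //; rewrite inE.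
  move=> h; have := le_trans hy (le_trans h hx).
  by rewrite leNgt xy.
move=> a b; rewrite !mem_iota /= !add0n => aL bL pa pb.
case: (ltngtP a b) => // ab.
  by have := key a b ab bL; rewrite /= pa pb.
by have := key b a ab aL; rewrite /= pa pb.
Qed.

Lemma sumn_le {T : Type} (f : T -> nat) (s : seq T) (b : nat) :
  (forall z, f z <= b)%N -> (sumn (map f s) <= size s * b)%N.
Proof.
move=> H; elim: s => //= a s IH; rewrite mulSn; exact: leq_add.
Qed.

Lemma sumn_le_in {T : eqType} (f : T -> nat) (s : seq T) (b : nat) :
  (forall z, z \in s -> f z <= b)%N -> (sumn (map f s) <= size s * b)%N.
Proof.
elim: s => //= a s IH H; rewrite mulSn; apply: leq_add.
  by apply: H; rewrite inE eqxx.
by apply: IH => z hz; apply: H; rewrite inE hz orbT.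
Qed.

Theorem lemma10 (R : realFieldType) (t phi : nat) (P : nat -> seq R)
  (col : nat -> R -> nat)
  (HPuniq : forall j, uniq (P j))
  (Hcol : forall j p, (1 <= j <= t)%N -> p \in P j -> (1 <= col j p <= phi)%N)
  (i : nat) (x y : R) :
  (1 <= i <= t)%N -> x < y ->
  shallow (i * phi) (in_Q x y i) (tildeP P col t phi).
Proof.
move=> /andP[i1 it] xy; rewrite /shallow /tildeP.
apply: (leq_trans (count_undup _ _)).
rewrite count_map /lifted_weighted count_flatten -map_comp.
have hj : forall j, (count (fun pw : (pt3 R * nat)%type => in_Q x y i pw.1)
   (flatten [seq lift_class (color_class (P j) (col j) c) j | c <- iota 1 phi])
   <= phi * (j <= i))%N.
  move=> j; rewrite count_flatten -map_comp.
  have := sumn_le (fun c => count (fun pw : (pt3 R * nat)%type => in_Q x y i pw.1)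
     (lift_class (color_class (P j) (col j) c) j)) (iota 1 phi) (j <= i)%N.
  rewrite size_iota; apply => c; apply: lift_le1 => //.
  exact: (sort_sorted (@le_total _ R)).
have -> : t = (i + (t - i))%N by rewrite subnKC.
rewrite iotaD map_cat sumn_cat.
rewrite -[X in (_ <= X)%N]addn0; apply: leq_add.
  apply: (leq_trans (sumn_le _ _ phi _)); last by rewrite size_iota.
  by move=> z; apply: (leq_trans (hj z)); case: (z <= i)%N; rewrite ?muln1 ?muln0.
apply: (leq_trans (sumn_le_in _ _ 0 _)); last by rewrite muln0.
move=> z.
rewrite mem_iota => /andP[hz _]; apply: (leq_trans (hj z)).
by move: hz; rewrite add1n ltnNge => /negbTE ->; rewrite muln0.
Qed.
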